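(* Let $(Q,\mathcal S)$ be a hypergraph with $Q=\{q_1,\dots,q_m\}$ and $\mathcal S=\{S_1,\dots,S_n\}$, where $n\ge 2$, every $S_j$ is a nonempty subset of $Q$, and $S_n=Q$. Let $G$ be the graph constructed from $(Q,\mathcal S)$ as follows. Its vertex set consists of the vertices $q_1,\dots,q_m$; vertices $S_1,\dots,S_n$; vertices $S_1',\dots,S_n'$; a vertex $q^i_j$ for every pair $(i,j)$ with $q_i\in S_j$ (let $Q'$ be the set of these); and vertices $q^*,u_1,u_2,v,w$. Its edges are: $q^i_jq_i$ and $q^i_jS_j$ for every $q^i_j\in Q'$; $q_iS_j'$ whenever $q_i\in S_j$; $S_jS_k'$ for all $j,k\in\{1,\dots,n\}$; $q^*u_1$, $q^*u_2$; $q^*q^i_j$ for every $q^i_j\in Q'$; $u_1S_j$ and $u_2S_j$ for every $j$; $u_1v$, $u_2v$; and $wS_j'$ for every $j$. Then $(Q,\mathcal S)$ has a $2$-colouring if and only if $G$ contains the path $P_5$ on five vertices as a contraction.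
   Context: A $2$-colouring of a hypergraph $(Q,\mathcal S)$ is a partition $(Q_1,Q_2)$ of $Q$ such that $Q_1\cap S\neq\emptyset$ and $Q_2\cap S\neq\emptyset$ for every $S\in\mathcal S$. Contracting an edge $uv$ means deleting $u$ and $v$ and adding a new vertex adjacent to $(N(u)\cup N(v))\setminus\{u,v\}$ (no multiple edges or loops). A graph contains $H$ as a contraction if $H$ can be obtained from it by a sequence of edge contractions. *)

(* Defs.v *)
From mathcomp Require Import all_boot.
Set Implicit Arguments. Unset Strict Implicit. Unset Printing Implicit Defensive.

(* A (simple) graph is represented on an ambient finite type T by a vertex
   set A : {set T} and an adjacency relation E : rel T (only its values on
   A matter). *)

(* Contracting the edge uv of (A,E): delete u and v, add a new vertex adjacent
   to (N(u) :|: N(v)) minus {u,v}. The new vertex is represented by u itself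
   (the result is isomorphic to the paper's construction). *)
Definition contract_verts (T : finType) (A : {set T}) (v : T) : {set T} := A :\ v.

Definition contract_adj (T : finType) (A : {set T}) (E : rel T) (u v : T) : rel T :=
  fun x y =>
    [&& x \in A :\ v, y \in A :\ v, x != y &
        [|| E x y, (x == u) && E v y | (y == u) && E x v]].

Inductive contracts (T : finType) : {set T} -> rel T -> {set T} -> rel T -> Prop :=
| contracts_refl (A : {set T}) (E : rel T) : contracts A E A E
| contracts_step (A : {set T}) (E : rel T) (u v : T) (A' : {set T}) (E' : rel T) :
    u \in A -> v \in A -> u != v -> E u v ->
    contracts (contract_verts A v) (contract_adj A E u v) A' E' ->
    contracts A E A' E'.

Definition graph_iso (T H : finType) (A : {set T}) (E : rel T) (EH : rel H) : Prop :=
  exists f : T -> H,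
    [/\ {in A &, injective f}, (forall h : H, exists2 x, x \in A & f x = h)
      & {in A &, forall x y, E x y = EH (f x) (f y)}].

Definition has_contraction (T H : finType) (A : {set T}) (E : rel T) (EH : rel H) : Prop :=
  exists A' E', contracts A E A' E' /\ graph_iso A' E' EH.

Definition P5_adj : rel 'I_5 := fun i j => (i.+1 == j :> nat) || (j.+1 == i :> nat).

Definition two_colouring (m n : nat) (S : 'I_n -> {set 'I_m}) (Q1 Q2 : {set 'I_m}) : Prop :=
  [/\ Q1 :|: Q2 = setT, Q1 :&: Q2 = set0 &
      forall j : 'I_n, Q1 :&: S j != set0 /\ Q2 :&: S j != set0].

Definition has_two_colouring (m n : nat) (S : 'I_n -> {set 'I_m}) : Prop :=
  exists Q1 Q2, two_colouring S Q1 Q2.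

(* Q' = the vertices q^i_j, i.e. pairs (i,j) with q_i in S_j. *)
Definition Qp (m n : nat) (S : 'I_n -> {set 'I_m}) : finType :=
  {p : 'I_m * 'I_n | p.1 \in S p.2}.

(* Vertices: q_i | S_j | S'_j | q^i_j | specials (0 = q*, 1 = u1, 2 = u2, 3 = v, 4 = w) *)
Definition Vtx (m n : nat) (S : 'I_n -> {set 'I_m}) : finType :=
  (('I_m + 'I_n) + ('I_n + (Qp S + 'I_5)))%type.

Section G.
Variables (m n : nat) (S : 'I_n -> {set 'I_m}).

Definition vq (i : 'I_m) : Vtx S := inl (inl i).
Definition vS (j : 'I_n) : Vtx S := inl (inr j).
Definition vS' (j : 'I_n) : Vtx S := inr (inl j).
Definition vQ (p : Qp S) : Vtx S := inr (inr (inl p)).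
Definition vspec (k : 'I_5) : Vtx S := inr (inr (inr k)).

(* one orientation of each edge *)
Definition G_adj_dir (x y : Vtx S) : bool :=
  match x, y with
  | inr (inr (inl p)), inl (inl i) => i == (val p).1
  | inr (inr (inl p)), inl (inr j) => j == (val p).2
  | inl (inl i), inr (inl j) => i \in S j
  | inl (inr _), inr (inl _) => true
  | inr (inr (inr a)), inr (inr (inr b)) =>
      [|| (val a == 0) && (val b == 1), (val a == 0) && (val b == 2),
          (val a == 1) && (val b == 3) | (val a == 2) && (val b == 3)]
  | inr (inr (inr a)), inr (inr (inl _)) => val a == 0
  | inr (inr (inr a)), inl (inr _) => (val a == 1) || (val a == 2)
  | inr (inr (inr a)), inr (inl _) => val a == 4
  | _, _ => false
  end.

Definition G_adj : rel (Vtx S) := fun x y => G_adj_dir x y || G_adj_dir y x.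

End G.

Arguments G_adj {m n} S x y.
Arguments G_adj_dir {m n} S x y.

(* Main.v *)
Require Import Defs.
From mathcomp Require Import all_boot.
From mathcomp Require Import zify.
Set Implicit Arguments. Unset Strict Implicit. Unset Printing Implicit Defensive.


Section Generic.
Variable T : finType.

Definition closedin (E : rel T) (K C : {set T}) :=
  forall x y, x \in C -> y \in K -> E x y -> y \in C.

Definition conn (E : rel T) (K : {set T}) :=
  forall C : {set T}, C \subset K -> C != set0 -> closedin E K C -> C = K.

Lemma contracts_sub (A : {set T}) E A' E' : contracts A E A' E' -> A' \subset A.
Proof.
elim=> {A E A' E'} [A E|A E u v A' E' uA vA uv Euv _ IH]; first exact: subxx.
apply: subset_trans IH _; exact: subD1set.
Qed.

Lemma contract_sym (A : {set T}) (E : rel T) u v : symmetric E -> symmetric (contract_adj A E u v).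
Proof.
move=> sE x y; rewrite /contract_adj (sE y x) (sE v x) (sE y v) [y == x]eq_sym.
by case: (x \in _); case: (y \in _); case: (x != y); case: (E x y);
   case: (x == u); case: (y == u); case: (E v y); case: (E x v).
Qed.

Lemma edge_step (A : {set T}) (E : rel T) u v (phi : T -> T) x y :
  u \in A -> v \in A -> u != v -> phi v = phi u -> x != y ->
  [exists a, exists b, [&& a \in A :\ v, b \in A :\ v, phi a == x, phi b == y
                          & contract_adj A E u v a b]] =
  [exists a, exists b, [&& a \in A, b \in A, phi a == x, phi b == y & E a b]].
Proof.
move=> uA vA uv pvu xy.
apply/existsP/existsP.
- case=> a /existsP [b /and5P [aA bA pa pb]].
  case/and4P=> _ _ ab /or3P [E1 | /andP [/eqP au Evb] | /andP [/eqP bu Eav]].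
  + exists a; apply/existsP; exists b.
    by rewrite (subsetP (subD1set A v) a aA) (subsetP (subD1set A v) b bA) pa pb E1.
  + exists v; apply/existsP; exists b.
    by rewrite vA (subsetP (subD1set A v) b bA) pvu -au pa pb Evb.
  + exists a; apply/existsP; exists v.
    by rewrite vA (subsetP (subD1set A v) a aA) pvu -bu pa pb Eav.
- case=> a /existsP [b /and5P [aA bA /eqP pa /eqP pb Eab]].
  have uA' : u \in A :\ v by rewrite !inE uv uA.
  case: (eqVneq a v) => [av|av].
  + subst a.
    have bv : b != v by apply/eqP=> bv; subst b; rewrite -pa -pb eqxx in xy.
    have ub : u != b by apply/eqP=> ub; subst b; rewrite -pa -pb pvu eqxx in xy.
    exists u; apply/existsP; exists b.
    rewrite uA' !inE bv bA -pvu pa pb !eqxx /contract_adj uA' !inE bv bA ub Eab /=.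
    by rewrite eqxx orbT.
  + case: (eqVneq b v) => [bv|bv].
    * subst b.
      have au : a != u by apply/eqP=> au; subst a; rewrite -pa -pb pvu eqxx in xy.
      exists a; apply/existsP; exists u.
      by rewrite uA' !inE av aA -pvu pa pb !eqxx /contract_adj uA' !inE av aA au eqxx Eab !orbT.
    * have ab : a != b by apply/eqP=> ab; subst b; rewrite -pa -pb eqxx in xy.
      exists a; apply/existsP; exists b.
      by rewrite !inE av aA bv bA pa pb !eqxx /contract_adj !inE av aA bv bA ab Eab.
Qed.


Lemma conn_fwd_step (A : {set T}) (E : rel T) u v (phi : T -> T) s :
  symmetric E -> u \in A -> v \in A -> u != v -> E u v -> phi v = phi u ->
  conn E [set x in A | phi x == s] ->
  conn (contract_adj A E u v) [set x in A :\ v | phi x == s].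
Proof.
move=> sE uA vA uv Euv pvu cK C sC nC clC.
set K := [set x in A | phi x == s].
set K' := [set x in A :\ v | phi x == s].
have K'K : K' \subset K by apply/subsetP=> z; rewrite !inE => /andP [/andP [_ ->] ->].
have vC : v \notin C by apply/negP=> /(subsetP sC); rewrite !inE eqxx.
case uC : (u \in C).
- have uK' : u \in K' := subsetP sC u uC.
  have vK : v \in K by move: uK'; rewrite !inE pvu vA => /andP [_ ->].
  have sD : v |: C \subset K.
    by apply/subsetP=> z /setU1P [-> // | /(subsetP sC) /(subsetP K'K)].
  have nD : v |: C != set0 by apply/set0Pn; exists v; rewrite !inE eqxx.
  have clD : closedin E K (v |: C).
    move=> x y; rewrite !inE => xD yK Exy.
    case: (eqVneq y v) => [-> | yv]; first by [].
    have yK' : y \in K' by move: yK; rewrite !inE yv.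
    apply/orP; right.
    case/orP: xD => [/eqP xv | xC].
    + subst x; case: (eqVneq u y) => [<- //| uy].
      apply: (clC u y uC yK').
      move: uK' yK'; rewrite /contract_adj !inE => /andP [/andP [-> ->] _] /andP [/andP [-> ->] _].
      by rewrite uy eqxx Exy orbT.
    + case: (eqVneq x y) => [<- //| xy].
      apply: (clC x y xC yK').
      have xK' := subsetP sC x xC.
      move: xK' yK'; rewrite /contract_adj !inE => /andP [/andP [-> ->] _] /andP [/andP [-> ->] _].
      by rewrite xy Exy.
  have eD := cK _ sD nD clD.
  apply/eqP; rewrite eqEsubset sC /=; apply/subsetP=> z zK'.
  have : z \in v |: C by rewrite eD; apply: (subsetP K'K).
  rewrite !inE => /orP [/eqP zv | //]; subst z.
  by move: zK'; rewrite !inE eqxx.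
- have sCK : C \subset K := subset_trans sC K'K.
  have clCK : closedin E K C.
    move=> x y xC yK Exy.
    have xK' := subsetP sC x xC.
    case: (eqVneq y v) => [yv | yv].
    + subst y.
      have uK' : u \in K'.
        by move: yK; rewrite !inE -pvu uv uA => /andP [_ ->].
      have : contract_adj A E u v x u.
        move: xK' uK'; rewrite /contract_adj !inE => /andP [/andP [-> ->] _] /andP [/andP [-> ->] _].
        have -> : x != u by apply/eqP=> xu; subst x; rewrite xC in uC.
        by rewrite eqxx Exy !orbT.
      by move/(clC x u xC uK'); rewrite uC.
    + have yK' : y \in K' by move: yK; rewrite !inE yv.
      case: (eqVneq x y) => [<- //| xy].
      apply: (clC x y xC yK').
      move: xK' yK'; rewrite /contract_adj !inE => /andP [/andP [-> ->] _] /andP [/andP [-> ->] _].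
      by rewrite xy Exy.
  have eC := cK _ sCK nC clCK.
  by apply/eqP; rewrite eqEsubset sC /= eC.
Qed.


Lemma conn_bwd_step (A : {set T}) (E : rel T) u v (phi' : T -> T) s :
  symmetric E -> u \in A -> v \in A -> u != v -> E u v ->
  conn (contract_adj A E u v) [set x in A :\ v | phi' x == s] ->
  conn E [set x in A | (if x == v then phi' u else phi' x) == s].
Proof.
move=> sE uA vA uv Euv cK' C sC nC clC.
set K := [set x in A | _].
set K' := [set x in A :\ v | phi' x == s].
have inK' z : (z \in K') = (z != v) && (z \in K).
  by rewrite !inE; case: (eqVneq z v) => //= ->.
have vKu : (v \in K) = (u \in K').
  by rewrite !inE eqxx vA uv uA.
have uK'v : u \in K' -> v \in C -> u \in C.
  move=> uK' vC; apply: (clC v u vC); last by rewrite sE.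
  by move: uK'; rewrite inK' => /andP [].
set C' := C :\ v.
have sC' : C' \subset K'.
  by apply/subsetP=> z /setD1P [zv /(subsetP sC) zK]; rewrite inK' zv.
have nC' : C' != set0.
  case/set0Pn: nC => z zC; apply/set0Pn.
  case: (eqVneq z v) => [zv | zv].
  - subst z; exists u; rewrite !inE uv /= uK'v //.
    by rewrite -vKu (subsetP sC).
  - by exists z; rewrite !inE zv.
have clC' : closedin (contract_adj A E u v) K' C'.
  move=> x y; rewrite [x \in C']inE => /andP [xv xC] yK'.
  have yK : y \in K by move: yK'; rewrite inK' => /andP [].
  have yv : y != v by move: yK'; rewrite inK' => /andP [].
  rewrite /contract_adj => /and4P [_ _ _ /or3P [Exy | /andP [/eqP xu Evy] | /andP [/eqP yu Exv]]].
  - by rewrite !inE yv (clC x y xC yK Exy).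
  - subst x.
    have vK : v \in K by rewrite vKu; apply: (subsetP sC'); rewrite !inE uv.
    have vC : v \in C by apply: (clC u v xC vK Euv).
    by rewrite !inE yv (clC v y vC yK Evy).
  - subst y.
    have vK : v \in K by rewrite vKu.
    have vC : v \in C by apply: (clC x v xC vK Exv).
    by rewrite !inE yv uK'v.
have eC' := cK' _ sC' nC' clC'.
apply/eqP; rewrite eqEsubset sC /=; apply/subsetP=> z zK.
case: (eqVneq z v) => [zv | zv].
- subst z.
  have uK' : u \in K' by rewrite -vKu.
  have uC' : u \in C' by rewrite eC'.
  have uC : u \in C by move: uC'; rewrite !inE => /andP [].
  by apply: (clC u v uC zK Euv).
- have : z \in C' by rewrite eC' inK' zv.
  by rewrite !inE => /andP [].
Qed.


Definition quot_adj (A : {set T}) (E : rel T) (phi : T -> T) (x y : T) :=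
  [exists a, exists b, [&& a \in A, b \in A, phi a == x, phi b == y & E a b]].

Lemma contract_bwd (A : {set T}) (E : rel T) A' E' :
  contracts A E A' E' -> symmetric E ->
  exists phi : T -> T,
    [/\ A' \subset A, (forall x, x \in A -> phi x \in A'),
        (forall r, r \in A' -> phi r = r),
        (forall r, r \in A' -> conn E [set x in A | phi x == r]) &
        (forall x y, x \in A' -> y \in A' -> x != y -> E' x y = quot_adj A E phi x y)].
Proof.
elim=> {A E A' E'} [A E|A E u v A' E' uA vA uv Euv _ IH] sE.
- exists id; split=> //.
  + move=> r rA C sC nC clC.
    apply/eqP; rewrite eqEsubset sC /=; apply/subsetP=> z; rewrite !inE => /andP [_ /eqP zr].
    subst z; case/set0Pn: nC => z zC.
    by move: (subsetP sC z zC); rewrite !inE => /andP [_ /eqP <-].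
  + move=> x y xA yA xy; apply/idP/existsP.
    * by move=> Exy; exists x; apply/existsP; exists y; rewrite xA yA !eqxx Exy.
    * by case=> a /existsP [b /and5P [_ _ /eqP <- /eqP <-]].
- have [phi' [sA' phiA' phir cphi eE']] := IH (contract_sym A u v sE).
  pose phi x := if x == v then phi' u else phi' x.
  have uA' : u \in A :\ v by rewrite !inE uv uA.
  have phiE x : x != v -> phi x = phi' x by rewrite /phi => /negbTE ->.
  exists phi; split.
  + by apply: subset_trans sA' (subD1set A v).
  + move=> x xA; rewrite /phi; case: (eqVneq x v) => [_|xv]; first exact: phiA'.
    by apply: phiA'; rewrite !inE xv.
  + move=> r rA'; have := subsetP sA' r rA'; rewrite !inE => /andP [rv _].
    by rewrite phiE // phir.
  + move=> r rA'; exact: conn_bwd_step sE uA vA uv Euv (cphi r rA').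
  + move=> x y xA' yA' xy; rewrite eE' // /quot_adj.
    rewrite -(@edge_step A E u v phi x y uA vA uv) //; last by rewrite /phi eqxx; case: (u == v).
    apply/existsP/existsP => -[a /existsP [b /and5P [aA bA pa pb Eab]]]; exists a; apply/existsP; exists b.
    * have av : a != v by move: aA; rewrite !inE => /andP [].
      have bv : b != v by move: bA; rewrite !inE => /andP [].
      by rewrite aA bA Eab phiE // phiE // pa pb.
    * have av : a != v by move: aA; rewrite !inE => /andP [].
      have bv : b != v by move: bA; rewrite !inE => /andP [].
      by rewrite aA bA Eab -phiE // -(phiE b) // pa pb.
Qed.

Lemma contract_fwd (R : {set T}) (phi : T -> T) :
  forall N (A : {set T}) (E : rel T), #|A| <= N ->
  symmetric E -> irreflexive E -> R \subset A ->
  (forall x, x \in A -> phi x \in R) -> (forall r, r \in R -> phi r = r) ->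
  (forall r, r \in R -> conn E [set x in A | phi x == r]) ->
  exists E', [/\ contracts A E R E', irreflexive E' &
     forall x y, x \in R -> y \in R -> x != y -> E' x y = quot_adj A E phi x y].
Proof.
elim=> [|N IH] A E szA sE iE sRA phiR phir cE.
- have A0 : A = set0 by apply/eqP; rewrite -cards_eq0; move: szA; case: #|A|.
  have R0 : R = set0 by apply/eqP; rewrite -subset0 -A0.
  subst A R; exists E; split=> //; first exact: contracts_refl.
  by move=> x y; rewrite inE.
case: (boolP (A \subset R)) => [sAR | /subsetPn [x xA xR]].
- have eAR : A = R by apply/eqP; rewrite eqEsubset sAR.
  subst A; exists E; split=> //; first exact: contracts_refl.
  move=> x y xA yA xy; apply/idP/existsP.
  + by move=> Exy; exists x; apply/existsP; exists y; rewrite xA yA !phir // !eqxx Exy.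
  + case=> a /existsP [b /and5P [aA bA /eqP <- /eqP <-]].
    by rewrite !phir.
set r := phi x.
have rR : r \in R := phiR x xA.
have rA : r \in A := subsetP sRA r rR.
set K := [set z in A | phi z == r].
case: (boolP [exists z, (z \in K) && E r z]) => [/existsP [v /andP [vK Erv]] | none].
- have rv : r != v by apply/eqP=> rv; rewrite -rv iE in Erv.
  have vA : v \in A by move: vK; rewrite !inE => /andP [].
  have pv : phi v = r by move: vK; rewrite !inE => /andP [_ /eqP].
  have vR : v \notin R by apply/negP=> vR; move: pv; rewrite phir // => vr; rewrite vr eqxx in rv.
  have szA' : #|A :\ v| <= N.
    by move: szA; rewrite (cardsD1 v A) vA add1n ltnS.
  have sRA' : R \subset A :\ v.
    apply/subsetP=> z zR; rewrite !inE (subsetP sRA z zR) andbT.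
    by apply/eqP=> zv; subst z; rewrite zR in vR.
  have phiR' : forall z, z \in A :\ v -> phi z \in R.
    by move=> z; rewrite !inE => /andP [_ /phiR].
  have cE' : forall s, s \in R -> conn (contract_adj A E r v) [set z in A :\ v | phi z == s].
    move=> s sR; apply: conn_fwd_step => //; first by rewrite pv phir.
    exact: cE.
  have iE2 : irreflexive (contract_adj A E r v).
    by move=> z; rewrite /contract_adj eqxx /= !andbF.
  have [E' [cE'' iE' eE']] := IH (A :\ v) (contract_adj A E r v) szA'
     (contract_sym A r v sE) iE2 sRA' phiR' phir cE'.
  exists E'; split=> //.
  + exact: contracts_step rA vA rv Erv cE''.
  + move=> a b aR bR ab; rewrite eE' // /quot_adj.
    by apply: edge_step => //; rewrite pv phir.
- have := cE r rR [set r].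
  have rK : r \in K by rewrite !inE rA phir // eqxx.
  have -> : [set r] \subset [set z in A | phi z == r] by rewrite sub1set.
  move=> /(_ isT) /(_ (ltac:(by apply/set0Pn; exists r; rewrite inE))).
  have cl : closedin E [set z in A | phi z == r] [set r].
    move=> a b; rewrite inE => /eqP -> bK Erb.
    by move: none; rewrite negb_exists => /forallP /(_ b); rewrite bK Erb.
  move=> /(_ cl) eK.
  have : x \in [set z in A | phi z == r] by rewrite !inE xA /r eqxx.
  rewrite -eK inE => /eqP xr.
  by move: xR; rewrite xr rR.
Qed.

End Generic.


Section G.
Variables (m n : nat) (S : 'I_n -> {set 'I_m}).

Definition o5 (k : nat) (h : k < 5) : 'I_5 := Ordinal h.
Definition qs : Vtx S := vspec S (@Ordinal 5 0 isT).
Definition u1 : Vtx S := vspec S (@Ordinal 5 1 isT).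
Definition u2 : Vtx S := vspec S (@Ordinal 5 2 isT).
Definition vv : Vtx S := vspec S (@Ordinal 5 3 isT).
Definition ww : Vtx S := vspec S (@Ordinal 5 4 isT).

Lemma G_sym : symmetric (G_adj S).
Proof. by move=> x y; rewrite /G_adj orbC. Qed.

Inductive vcase : Vtx S -> Type :=
| VCq i : vcase (vq S i)
| VCS j : vcase (vS S j)
| VCS' j : vcase (vS' S j)
| VCQ p : vcase (vQ p)
| VCqs : vcase qs
| VCu1 : vcase u1
| VCu2 : vcase u2
| VCv : vcase vv
| VCw : vcase ww.

Lemma vcaseP x : vcase x.
Proof.
case: x => [[i|j]|[j|[p|k]]]; first [exact: VCq | exact: VCS | exact: VCS' | exact: VCQ | idtac].
case: k => [[|[|[|[|[|k]]]]] hk].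
- have -> : Ordinal hk = @Ordinal 5 0 isT by apply: val_inj.
  exact: VCqs.
- have -> : Ordinal hk = @Ordinal 5 1 isT by apply: val_inj.
  exact: VCu1.
- have -> : Ordinal hk = @Ordinal 5 2 isT by apply: val_inj.
  exact: VCu2.
- have -> : Ordinal hk = @Ordinal 5 3 isT by apply: val_inj.
  exact: VCv.
- have -> : Ordinal hk = @Ordinal 5 4 isT by apply: val_inj.
  exact: VCw.
- by [].
Qed.

Lemma G_irr : irreflexive (G_adj S).
Proof. by move=> x; case: (vcaseP x) => //= *; rewrite /G_adj /= ?orbF. Qed.


Lemma nb_q i y : G_adj S (vq S i) y ->
  (exists2 j, i \in S j & y = vS' S j) \/ (exists2 p : Qp S, (val p).1 = i & y = vQ p).
Proof.
case: (vcaseP y) => [i'|k|k|p|||||]; rewrite /G_adj /= ?orbF ?orFb => // H.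
- by left; exists k.
- by right; exists p => //; apply/eqP; rewrite eq_sym.
Qed.

Lemma nb_S j y : G_adj S (vS S j) y ->
  [\/ exists k, y = vS' S k, exists2 p : Qp S, (val p).2 = j & y = vQ p, y = u1 | y = u2].
Proof.
case: (vcaseP y) => [i'|k|k|p|||||]; rewrite /G_adj /= ?orbF ?orFb => // H.
- by constructor 1; exists k.
- by constructor 2; exists p => //; apply/eqP; rewrite eq_sym.
- by constructor 3.
- by constructor 4.
Qed.

Lemma nb_S' j y : G_adj S (vS' S j) y ->
  [\/ exists2 i, i \in S j & y = vq S i, exists k, y = vS S k | y = ww].
Proof.
case: (vcaseP y) => [i'|k|k|p|||||]; rewrite /G_adj /= ?orbF ?orFb => // H.
- by constructor 1; exists i'.
- by constructor 2; exists k.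
- by constructor 3.
Qed.

Lemma nb_Q p y : G_adj S (vQ p) y -> [\/ y = vq S (val p).1, y = vS S (val p).2 | y = qs].
Proof.
case: (vcaseP y) => [i'|k|k|p'|||||]; rewrite /G_adj /= ?orbF ?orFb => // H.
- by constructor 1; rewrite (eqP H).
- by constructor 2; rewrite (eqP H).
- by constructor 3.
Qed.

Lemma nb_qs y : G_adj S qs y -> [\/ y = u1, y = u2 | exists p, y = vQ p].
Proof.
case: (vcaseP y) => [i'|k|k|p'|||||]; rewrite /G_adj /= ?orbF ?orFb => // H.
- by constructor 3; exists p'.
- by constructor 1.
- by constructor 2.
Qed.

Lemma nb_u1 y : G_adj S u1 y -> [\/ y = qs, y = vv | exists j, y = vS S j].
Proof.
case: (vcaseP y) => [i'|k|k|p'|||||]; rewrite /G_adj /= ?orbF ?orFb => // H.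
- by constructor 3; exists k.
- by constructor 1.
- by constructor 2.
Qed.

Lemma nb_u2 y : G_adj S u2 y -> [\/ y = qs, y = vv | exists j, y = vS S j].
Proof.
case: (vcaseP y) => [i'|k|k|p'|||||]; rewrite /G_adj /= ?orbF ?orFb => // H.
- by constructor 3; exists k.
- by constructor 1.
- by constructor 2.
Qed.

Lemma nb_w y : G_adj S ww y -> exists j, y = vS' S j.
Proof.
case: (vcaseP y) => [i'|k|k|p'|||||]; rewrite /G_adj /= ?orbF ?orFb => // H.
by exists k.
Qed.

Lemma e_qS' i j : i \in S j -> G_adj S (vq S i) (vS' S j).
Proof. by rewrite /G_adj /= => ->. Qed.
Lemma e_SS' j k : G_adj S (vS S j) (vS' S k). Proof. by []. Qed.
Lemma e_Qq (p : Qp S) : G_adj S (vQ p) (vq S (val p).1). Proof. by rewrite /G_adj /= eqxx. Qed.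
Lemma e_QS (p : Qp S) : G_adj S (vQ p) (vS S (val p).2). Proof. by rewrite /G_adj /= eqxx. Qed.
Lemma e_Qqs (p : Qp S) : G_adj S (vQ p) qs. Proof. by []. Qed.
Lemma e_u1S j : G_adj S u1 (vS S j). Proof. by []. Qed.
Lemma e_u2S j : G_adj S u2 (vS S j). Proof. by []. Qed.
Lemma e_qsu1 : G_adj S qs u1. Proof. by []. Qed.
Lemma e_qsu2 : G_adj S qs u2. Proof. by []. Qed.
Lemma e_u1v : G_adj S u1 vv. Proof. by []. Qed.
Lemma e_u2v : G_adj S u2 vv. Proof. by []. Qed.
Lemma e_wS' j : G_adj S ww (vS' S j). Proof. by []. Qed.

End G.


Lemma sep1 (T : finType) (E : rel T) (K : {set T}) x y :
  conn E K -> x \in K -> y \in K -> x != y -> (forall z, E x z -> z \notin K) -> False.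
Proof.
move=> cK xK yK xy nb.
have sC : [set x] \subset K by rewrite sub1set.
have nC : [set x] != set0 by apply/set0Pn; exists x; rewrite inE.
have clC : closedin E K [set x].
  by move=> a b; rewrite inE => /eqP -> bK /nb; rewrite bK.
have := cK _ sC nC clC.
by move=> eK; move: yK; rewrite -eK inE eq_sym (negbTE xy).
Qed.

Section Rev.
Variables (m n : nat) (S : 'I_n -> {set 'I_m}).
Hypothesis n2 : 1 < n.
Hypothesis Slast : forall j : 'I_n, val j = n.-1 -> S j = setT.

Definition jn : 'I_n := @Ordinal n n.-1 (ltac:(by case: n n2)).
Definition j0 : 'I_n := @Ordinal n 0 (ltac:(by case: n n2)).
Lemma Sjn i : i \in S jn. Proof. by rewrite Slast // inE. Qed.
Definition qn (i : 'I_m) : Qp S := exist _ (i, jn) (Sjn i).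
Definition other (j : 'I_n) : 'I_n := if j == j0 then jn else j0.
Lemma other_neq j : other j != j.
Proof.
rewrite /other; case: (eqVneq j j0) => [-> | jj0]; last by rewrite eq_sym.
rewrite ?eqxx; apply/eqP=> /(congr1 val) /=; move: n2; case: (n) => [|[|k]] //.
Qed.

Variable P : Vtx S -> nat.
Hypothesis Lip : forall x y, G_adj S x y -> P x <= P y + 1.
Hypothesis Bnd : forall x, P x <= 4.
Hypothesis Conn : forall k, conn (G_adj S) [set x | P x == k].

Lemma Lip2 x y : G_adj S x y -> P x <= P y + 1 /\ P y <= P x + 1.
Proof. by move=> e; split; apply: Lip => //; rewrite G_sym. Qed.

Ltac lp e := let h1 := fresh "L" in let h2 := fresh "L" in have [h1 h2] := Lip2 e; rewrite /= in h1 h2.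

Lemma sepP k x y : P x = k -> P y = k -> x != y -> (forall z, G_adj S x z -> P z != k) -> False.
Proof.
move=> Px Py xy nb; apply: (@sep1 _ _ _ x y (@Conn k) _ _ xy).
- by rewrite inE Px.
- by rewrite inE Py.
- by move=> z /nb; rewrite inE.
Qed.

Lemma u12 : u1 S != u2 S. Proof. by []. Qed.

Lemma core : P (vv S) = 0 -> (exists x, P x = 4) -> has_two_colouring S.
Proof.
move=> Pv [x4 Px4].
lp (e_u1v S); lp (e_u2v S).
case: (vcaseP x4) Px4 => [i|k|k|p|||||] Px4; try lia.
- lp (e_qS' (Sjn i)); lp (e_Qq (qn i)); lp (e_Qqs (qn i)); lp (e_qsu1 S); lp (e_qsu2 S).
  exfalso; apply: (@sepP 1 (u1 S) (u2 S)); try lia; first exact: u12.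
  move=> z /nb_u1 [->|->|[j ->]]; try lia.
  lp (e_SS' S j jn); lia.
- lp (e_u1S S k); lia.
- lp (e_SS' S jn k); lp (e_u1S S jn); lia.
- lp (e_QS p); lp (e_u1S S (val p).2); lia.
- lp (e_qsu1 S); lia.
have PS' k : 3 <= P (vS' S k) by lp (e_wS' S k); lia.
lp (e_u1S S jn); lp (e_u2S S jn); have := PS' jn => ?; lp (e_SS' S jn jn).
have Pqs : P (qs S) = 1.
  case: (eqVneq (P (qs S)) 1) => // Hq; exfalso.
  apply: (@sepP 1 (u1 S) (u2 S)); try lia; first exact: u12.
  move=> z /nb_u1 [->|->|[j ->]]; try lia.
  lp (e_SS' S j jn); lia.
have PS j : P (vS S j) = 2 by lp (e_u1S S j); lp (e_SS' S j jn); lia.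
have PS'3 k : P (vS' S k) = 3 by have := PS' k; lp (e_SS' S jn k); have := PS jn; lia.
have Pq i : P (vq S i) = 2 \/ P (vq S i) = 3.
  lp (e_qS' (Sjn i)); have := PS'3 jn; have := Bnd (vq S i).
  case: (eqVneq (P (vq S i)) 4) => [H4 | H4]; last lia.
  exfalso; apply: (@sepP 4 (ww S) (vq S i)) => //.
  by move=> z /nb_w [j ->]; rewrite PS'3.
exists [set i | P (vq S i) == 3], (~: [set i | P (vq S i) == 3]).
split; [exact: setUCr | exact: setICr | move=> j; split].
- apply/negP=> /eqP Hq0.
  apply: (@sepP 3 (vS' S j) (vS' S (other j))); rewrite ?PS'3 //.
    by apply/eqP=> /(congr1 (fun x : Vtx S => if x is inr (inl k) then k else j)) /= /eqP;
       rewrite eq_sym (negbTE (other_neq j)).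
  move=> z /nb_S' [[i iS ->]|[k ->]|->]; rewrite ?PS ?Px4 //.
  apply/eqP=> Hi.
  have : i \in [set i | P (vq S i) == 3] :&: S j by rewrite !inE Hi eqxx iS.
  by rewrite Hq0 inE.
- apply/negP=> /eqP Hz0.
  have Q3 i : i \in S j -> P (vq S i) = 3.
    move=> iS; case: (Pq i) => // H2.
    have : i \in ~: [set i | P (vq S i) == 3] :&: S j by rewrite !inE H2 iS.
    by rewrite Hz0 inE.
  pose C := [set z | (P z == 2) && ((z == vS S j) || [exists p : Qp S, (z == vQ p) && ((val p).2 == j)])].
  have sC : C \subset [set z | P z == 2] by apply/subsetP=> z; rewrite !inE => /andP [].
  have nC : C != set0 by apply/set0Pn; exists (vS S j); rewrite !inE PS !eqxx.
  have clC : closedin (G_adj S) [set z | P z == 2] C.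
    move=> x y; rewrite !inE => /andP [_ /orP [/eqP -> | /existsP [p /andP [/eqP -> /eqP pj]]]] /eqP Py.
    + move/nb_S=> [[k Hy]|[p pj Hy]|Hy|Hy]; subst y; rewrite ?eqxx //=.
      * by rewrite PS'3 in Py.
      * by rewrite Py eqxx /=; apply/existsP; exists p; rewrite eqxx pj eqxx.
      * lia.
      * lia.
    + move/nb_Q=> [Hy|Hy|Hy]; subst y; rewrite ?eqxx //=.
      * by have := valP p; rewrite pj => hp; rewrite Q3 in Py.
      * by rewrite pj PS !eqxx.
      * lia.
  have := Conn sC nC clC => eC.
  have : vS S (other j) \in C by rewrite eC inE PS.
  rewrite inE PS eqxx /=.
  case/orP=> [/eqP /(congr1 (fun x : Vtx S => if x is inl (inr k) then k else j)) /= /eqP | /existsP [p]].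
    by rewrite (negbTE (other_neq j)).
  by [].
Qed.


Lemma j0jn : j0 != jn.
Proof. by have := other_neq j0; rewrite /other eqxx eq_sym. Qed.

Lemma vS'_neq a b : a != b -> vS' S a != vS' S b.
Proof.
by move=> ab; apply/eqP=> /(congr1 (fun x : Vtx S => if x is inr (inl k) then k else a)) /= e;
   rewrite e eqxx in ab.
Qed.

Ltac vf x := match x with
 | vq _ ?i => lp (e_qS' (Sjn i)); lp (e_Qq (qn i)); lp (e_Qqs (qn i))
 | vS _ ?k => lp (e_SS' S k jn); lp (e_u1S S k); lp (e_u2S S k)
 | vS' _ ?k => lp (e_SS' S jn k); lp (e_wS' S k)
 | vQ ?p => lp (e_Qqs p); lp (e_QS p); lp (e_Qq p); lp (e_SS' S (val p).2 jn); lp (e_u1S S (val p).2)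
 | _ => idtac end.

Lemma notv : P (vv S) <> 0 -> P (vv S) <> 4 -> (exists x, P x = 0) -> (exists x, P x = 4) -> False.
Proof.
move=> nv0 nv4 [x0 Px0] [x4 Px4].
lp (e_SS' S jn jn); lp (e_u1S S jn); lp (e_u2S S jn); lp (e_qsu1 S); lp (e_qsu2 S);
lp (e_u1v S); lp (e_u2v S); lp (e_wS' S jn).
case: (vcaseP x0) Px0 => [i|k|k|p|||||] Px0; case: (vcaseP x4) Px4 => [i'|k'|k'|p'|||||] Px4;
 (match goal with H : P ?a = 0, H' : P ?b = 4 |- _ => vf a; vf b end);
 try (match goal with H1 : P (vS' _ ?k) = _, H2 : P (vQ ?p) = _ |- _ => lp (e_SS' S (val p).2 k) end);
 try lia.
- have PS' k : P (vS' S k) = 3 by lp (e_wS' S k); lp (e_SS' S jn k); lia.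
  apply: (@sepP 3 (vS' S j0) (vS' S jn)); rewrite ?PS' //; first exact: vS'_neq j0jn.
  move=> z /nb_S' [[i iS ->]|[k ->]|->]; last by rewrite Px4.
  + by apply/eqP; lp (e_qS' (Sjn i)); lp (e_Qq (qn i)); lp (e_Qqs (qn i)); lia.
  + by apply/eqP; lp (e_u1S S k); lia.
- have PS' k : P (vS' S k) = 1 by lp (e_wS' S k); lp (e_SS' S jn k); lia.
  apply: (@sepP 1 (vS' S j0) (vS' S jn)); rewrite ?PS' //; first exact: vS'_neq j0jn.
  move=> z /nb_S' [[i iS ->]|[k ->]|->]; last by rewrite Px0.
  + by apply/eqP; lp (e_qS' (Sjn i)); lp (e_Qq (qn i)); lp (e_Qqs (qn i)); lia.
  + by apply/eqP; lp (e_u1S S k); lia.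
Qed.

End Rev.


Lemma conn_by (T : finType) (E : rel T) (K : {set T}) h :
  h \in K ->
  (forall C, closedin E K C -> forall x, x \in K -> x \in C -> h \in C) ->
  (forall C, closedin E K C -> h \in C -> forall x, x \in K -> x \in C) ->
  conn E K.
Proof.
move=> hK to from C sC nC clC.
case/set0Pn: nC => x xC.
have hC := to C clC x (subsetP sC x xC) xC.
apply/eqP; rewrite eqEsubset sC /=; apply/subsetP=> z zK.
exact: from.
Qed.

Section Fwd.
Variables (m n : nat) (S : 'I_n -> {set 'I_m}).
Hypothesis n2 : 1 < n.
Hypothesis Slast : forall j : 'I_n, val j = n.-1 -> S j = setT.
Variables Q1 Q2 : {set 'I_m}.
Hypothesis col : two_colouring S Q1 Q2.

Definition p (x : Vtx S) : nat :=
  match x with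
  | inl (inl i) => if i \in Q1 then 3 else 2
  | inl (inr _) => 2
  | inr (inl _) => 3
  | inr (inr (inl _)) => 2
  | inr (inr (inr k)) => nth 0 [:: 1; 1; 1; 0; 4] k
  end.

Definition rep (k : nat) : Vtx S :=
  match k with 0 => vv S | 1 => u1 S | 2 => vS S (jn n2) | 3 => vS' S (jn n2) | _ => ww S end.

Lemma prep k : k <= 4 -> p (rep k) = k.
Proof. by case: k => [|[|[|[|[|k]]]]]. Qed.

Lemma p_le x : p x <= 4.
Proof. by case: (vcaseP x) => //= i; case: ifP. Qed.

Lemma p_lip x y : G_adj S x y -> p x <= p y + 1.
Proof.
case: (vcaseP x) => [i|k|k|q|||||]; case: (vcaseP y) => [i'|k'|k'|q'|||||] //=;
  rewrite ?(fun_if (fun a => a <= _)) ?(fun_if (fun a => _ <= a + 1)); try case: ifP; try case: ifP; by [].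
Qed.

Lemma p_lip2 x y : G_adj S x y -> p x <= p y + 1 /\ p y <= p x + 1.
Proof. by move=> e; split; apply: p_lip => //; rewrite G_sym. Qed.

Lemma rep_adj k : k < 4 -> G_adj S (rep k) (rep k.+1).
Proof. by case: k => [|[|[|[|k]]]]. Qed.


Lemma pick1 j : exists2 i, i \in Q1 & i \in S j.
Proof.
case: col => _ _ /(_ j) [/set0Pn [i] + _]; rewrite inE => /andP [h1 h2]; by exists i.
Qed.

Lemma pick2 j : exists2 i, i \notin Q1 & i \in S j.
Proof.
case: col => _ I0 /(_ j) [_ /set0Pn [i]]; rewrite inE => /andP [h1 h2]; exists i => //.
apply/negP=> h; have : i \in Q1 :&: Q2 by rewrite inE h h1.
by rewrite I0 inE.
Qed.

Definition qp i j (h : i \in S j) : Qp S := exist _ (i, j) h.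

Lemma class_conn k : k <= 4 -> conn (G_adj S) [set x | p x == k].
Proof.
set jn := jn n2.
have Sjn := Sjn n2 Slast.
move=> hk; set K := [set x | p x == k].
have step C x y : closedin (G_adj S) K C -> x \in C -> G_adj S x y -> p y = k -> y \in C.
  by move=> clC xC e py; apply: (clC x y xC) => //; rewrite inE py.
have stepr C x y : closedin (G_adj S) K C -> y \in C -> G_adj S x y -> p x = k -> x \in C.
  by move=> clC yC e px; apply: (step C y x) => //; rewrite G_sym.
case: k hk @K step stepr => [|[|[|[|[|k]]]]] // _ K step stepr.
- apply: (@conn_by _ _ _ (vv S)); first by rewrite inE.
  + by move=> C _ x; rewrite inE; case: (vcaseP x) => //= i; case: ifP.
  + by move=> C _ hC x; rewrite inE; case: (vcaseP x) => //= i; case: ifP.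
- apply: (@conn_by _ _ _ (qs S)); first by rewrite inE.
  + move=> C clC x; rewrite inE; case: (vcaseP x) => //=; try (by move=> i; case: ifP).
    * by move=> _ xC; apply: (step C _ _ clC xC) => //; rewrite G_sym; exact: e_qsu1.
    * by move=> _ xC; apply: (step C _ _ clC xC) => //; rewrite G_sym; exact: e_qsu2.
  + move=> C clC hC x; rewrite inE; case: (vcaseP x) => //=; try (by move=> i; case: ifP).
    * by move=> _; apply: (step C _ _ clC hC) => //; exact: e_qsu1.
    * by move=> _; apply: (step C _ _ clC hC) => //; exact: e_qsu2.
- have qn2 i : i \notin Q1 -> p (vq S i) = 2 by rewrite /= => /negbTE ->.
  have chain C j : closedin (G_adj S) K C -> (vS S j \in C <-> vS S jn \in C).
    move=> clC; have [i iQ iS] := pick2 j.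
    have e1 := e_QS (qp iS); have e2 := e_Qq (qp iS).
    have e3 := e_Qq (qn n2 Slast i); have e4 := e_QS (qn n2 Slast i).
    rewrite /= in e1 e2 e3 e4.
    split=> h.
    + have h1 := stepr C _ _ clC h e1 erefl.
      have h2 := step C _ _ clC h1 e2 (qn2 i iQ).
      have h3 := stepr C _ _ clC h2 e3 erefl.
      exact: step C _ _ clC h3 e4 erefl.
    + have h3 := stepr C _ _ clC h e4 erefl.
      have h2 := step C _ _ clC h3 e3 (qn2 i iQ).
      have h1 := stepr C _ _ clC h2 e2 erefl.
      exact: step C _ _ clC h1 e1 erefl.
  apply: (@conn_by _ _ _ (vS S jn)); first by rewrite inE.
  + move=> C clC x; rewrite inE; case: (vcaseP x) => //=.
    * move=> i; case: ifP => // iQ _ xC.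
      have e3 := e_Qq (qn n2 Slast i); have e4 := e_QS (qn n2 Slast i); rewrite /= in e3 e4.
      have h3 := stepr C _ _ clC xC e3 erefl.
      exact: step C _ _ clC h3 e4 erefl.
    * by move=> j _ xC; apply/(chain C j clC).
    * move=> q _ xC; apply/(chain C (val q).2 clC).
      exact: step C _ _ clC xC (e_QS q) erefl.
  + move=> C clC hC x; rewrite inE; case: (vcaseP x) => //=.
    * move=> i; case: ifP => // iQ _.
      have e3 := e_Qq (qn n2 Slast i); have e4 := e_QS (qn n2 Slast i); rewrite /= in e3 e4.
      have h3 := stepr C _ _ clC hC e4 erefl.
      exact: step C _ _ clC h3 e3 (qn2 i (negbT iQ)).
    * by move=> j _; apply/(chain C j clC).
    * move=> q _; have := (chain C (val q).2 clC).2 hC => h.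
      exact: stepr C _ _ clC h (e_QS q) erefl.
- have qn3 i : i \in Q1 -> p (vq S i) = 3 by rewrite /= => ->.
  have chain C j : closedin (G_adj S) K C -> (vS' S j \in C <-> vS' S jn \in C).
    move=> clC; have [i iQ iS] := pick1 j.
    have e1 := e_qS' iS; have e2 := e_qS' (Sjn i).
    split=> h.
    + have h1 := stepr C _ _ clC h e1 (qn3 i iQ).
      exact: step C _ _ clC h1 e2 erefl.
    + have h1 := stepr C _ _ clC h e2 (qn3 i iQ).
      exact: step C _ _ clC h1 e1 erefl.
  apply: (@conn_by _ _ _ (vS' S jn)); first by rewrite inE.
  + move=> C clC x; rewrite inE; case: (vcaseP x) => //=.
    * move=> i; case: ifP => // iQ _ xC.
      exact: step C _ _ clC xC (e_qS' (Sjn i)) erefl.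
    * by move=> j _ xC; apply/(chain C j clC).
  + move=> C clC hC x; rewrite inE; case: (vcaseP x) => //=.
    * move=> i; case: ifP => // iQ _.
      exact: stepr C _ _ clC hC (e_qS' (Sjn i)) (qn3 i iQ).
    * by move=> j _; apply/(chain C j clC).
- apply: (@conn_by _ _ _ (ww S)); first by rewrite inE.
  + by move=> C _ x; rewrite inE; case: (vcaseP x) => //= i; case: ifP.
  + by move=> C _ hC x; rewrite inE; case: (vcaseP x) => //= i; case: ifP.
Qed.


Lemma fwd_contr : has_contraction [set: Vtx S] (G_adj S) P5_adj.
Proof.
pose phi x := rep (p x).
pose R := [set x | phi x == x].
have phiR x : phi x \in R by rewrite inE /phi prep // p_le.
have phir r : r \in R -> phi r = r by rewrite inE => /eqP.
have rep_inj a b : a <= 4 -> b <= 4 -> rep a = rep b -> a = b.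
  by move=> ha hb e; rewrite -(prep ha) -(prep hb) e.
have cR r : r \in R -> conn (G_adj S) [set x in [set: Vtx S] | phi x == r].
  move=> rR.
  have -> : [set x in [set: Vtx S] | phi x == r] = [set x | p x == p r].
    apply/setP=> x; rewrite !inE /=; rewrite -{1}(phir r rR) /phi.
    apply/eqP/eqP => [e | ->] //.
    by apply: rep_inj; rewrite ?p_le.
  by apply: class_conn; rewrite p_le.
have [E' [cE iE' eE']] := @contract_fwd _ R phi #|[set: Vtx S]| [set: Vtx S] (G_adj S) (leqnn _)
   (@G_sym m n S) (@G_irr m n S) (subsetT R) (fun x _ => phiR x) phir cR.
exists R, E'; split=> //.
exists (fun x => inord (p x) : 'I_5); split.
- move=> x y xR yR /(congr1 val) /=; rewrite !inordK ?ltnS ?p_le // => e.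
  by rewrite -(phir x xR) -(phir y yR) /phi e.
- move=> h; exists (rep h).
    by rewrite inE /phi prep // -ltnS.
  by apply: val_inj; rewrite /= prep ?inordK // -ltnS.
- move=> x y xR yR.
  have ex : rep (p x) = x := phir x xR.
  have ey : rep (p y) = y := phir y yR.
  case: (eqVneq x y) => [<- | xy].
    by rewrite iE' /P5_adj inordK ?ltnS ?p_le //; case: (p x) => [|k] /=; rewrite ?eqn_leq ?ltnn ?andbF.
  rewrite eE' // /quot_adj /P5_adj !inordK ?ltnS ?p_le //.
  have pxy : p x != p y by apply/eqP=> e; rewrite -ex -ey e eqxx in xy.
  apply/idP/idP.
  + case/existsP=> a /existsP [b /and5P [_ _ /eqP pa /eqP pb e]].
    have pa' : p a = p x by apply: rep_inj; rewrite ?p_le // ex.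
    have pb' : p b = p y by apply: rep_inj; rewrite ?p_le // ey.
    have [l1 l2] := p_lip2 e.
    move: pxy; rewrite -pa' -pb'; move: l1 l2; lia.
  + move=> h; apply/existsP; exists x; apply/existsP; exists y.
    rewrite !in_setT !phir // !eqxx /=.
    have hx := p_le x; have hy := p_le y.
    case/orP: h => /eqP h.
    * by rewrite -ex -ey -h rep_adj //; lia.
    * by rewrite G_sym -ex -ey -h rep_adj //; lia.
Qed.

End Fwd.


Lemma conn0 (T : finType) (E : rel T) : conn E set0.
Proof. by move=> C; rewrite subset0 => /eqP ->; rewrite eqxx. Qed.

Section Main.
Variables (m n : nat) (S : 'I_n -> {set 'I_m}).
Hypothesis n2 : 1 < n.
Hypothesis Slast : forall j : 'I_n, val j = n.-1 -> S j = setT.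

Lemma rev_main (P : Vtx S -> nat) :
  (forall x y, G_adj S x y -> P x <= P y + 1) -> (forall x, P x <= 4) ->
  (forall k, conn (G_adj S) [set x | P x == k]) ->
  (exists x, P x = 0) -> (exists x, P x = 4) -> has_two_colouring S.
Proof.
move=> Lip Bnd Conn Ex0 Ex4.
case: (eqVneq (P (vv S)) 0) => [v0|v0]; first exact: (@core m n S n2 Slast P Lip Bnd Conn).
case: (eqVneq (P (vv S)) 4) => [v4|v4]; last first.
  by exfalso; apply: (@notv m n S n2 Slast P Lip Conn) => //; apply/eqP.
pose P' x := 4 - P x.
have Lip' x y : G_adj S x y -> P' x <= P' y + 1.
  by move=> e; have := Lip y x (ltac:(by rewrite G_sym)); have := Bnd x; have := Bnd y; rewrite /P'; lia.
have Bnd' x : P' x <= 4 by rewrite /P'; lia.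
have Conn' k : conn (G_adj S) [set x | P' x == k].
  case: (leqP k 4) => hk.
  - have -> : [set x | P' x == k] = [set x | P x == 4 - k].
      by apply/setP=> x; rewrite !inE /P'; have hb := Bnd x; apply/eqP/eqP; lia.
    exact: (@Conn (4 - k)).
  - have -> : [set x | P' x == k] = set0.
      by apply/setP=> x; rewrite !inE /P'; apply/eqP; lia.
    exact: conn0.
apply: (@core m n S n2 Slast P' Lip' Bnd' Conn'); first by rewrite /P' v4.
by case: Ex0 => x Px; exists x; rewrite /P' Px.
Qed.

Lemma rev_dir : has_contraction [set: Vtx S] (G_adj S) P5_adj -> has_two_colouring S.
Proof.
move=> [A' [E' [cE [f [finj fsurj fE]]]]].
have [phi [sA' phiA phir cphi eE]] := contract_bwd cE (@G_sym m n S).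
pose P x := nat_of_ord (f (phi x)).
apply: (@rev_main P).
- move=> x y e; rewrite /P.
  case: (eqVneq (phi x) (phi y)) => [-> | nxy]; first lia.
  have hx := phiA x (in_setT x); have hy := phiA y (in_setT y).
  have : E' (phi x) (phi y).
    by rewrite eE // /quot_adj; apply/existsP; exists x; apply/existsP; exists y; rewrite !in_setT !eqxx e.
  rewrite fE // /P5_adj => /orP [/eqP | /eqP]; lia.
- by move=> x; rewrite /P; have := ltn_ord (f (phi x)); lia.
- move=> k; case: (ltnP k 5) => hk.
  + have [r rA fr] := fsurj (Ordinal hk).
    have -> : [set x | P x == k] = [set x in [set: Vtx S] | phi x == r].
      apply/setP=> x; rewrite !inE /P; apply/eqP/eqP => [e | ->].
      * apply: finj => //; first exact: phiA.
        by apply: val_inj; rewrite fr /= e.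
      * by rewrite fr.
    exact: cphi.
  + have -> : [set x | P x == k] = set0.
      by apply/setP=> x; rewrite !inE /P; have hb := ltn_ord (f (phi x)); apply/eqP; lia.
    exact: conn0.
- have [r rA fr] := fsurj (@Ordinal 5 0 isT).
  by exists r; rewrite /P phir // fr.
- have [r rA fr] := fsurj (@Ordinal 5 4 isT).
  by exists r; rewrite /P phir // fr.
Qed.

End Main.


Theorem lemma3 (m n : nat) (S : 'I_n -> {set 'I_m}) :
  2 <= n ->
  (forall j : 'I_n, S j != set0) ->
  (forall j : 'I_n, val j = n.-1 -> S j = setT) ->
  has_two_colouring S <-> has_contraction [set: Vtx S] (G_adj S) P5_adj.
Proof.
move=> n2 _ Slast; split.
- by case=> Q1 [Q2 col]; apply: (fwd_contr n2 Slast col).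
- exact: (rev_dir n2 Slast).
Qed.
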